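(* Let $3\le k\le n$. The subgroup $VS_{k-1}^*$ of $VSPG_k$ is generated by the elements $\mu_{jk}$ for $1\le j\le k-1$ together with all reduced powers of the generators $\mu_{kj}$, $\gamma_{kj}$ and $\gamma_{jk}$ for $1\le j\le k-1$.
   Context: $VSPG_n$ is the group generated by $\{\mu_{ij},\gamma_{ij}\mid 1\le i\ne j\le n\}$ with defining relations (distinct letters denote distinct indices): $\mu_{ij}\mu_{ik}\mu_{jk}=\mu_{jk}\mu_{ik}\mu_{ij}$; $\mu_{ij}\mu_{ik}\gamma_{jk}=\gamma_{jk}\mu_{ik}\mu_{ij}$; $\gamma_{ij}\mu_{ik}\mu_{jk}=\mu_{jk}\mu_{ik}\gamma_{ij}$; $\mu_{ij}\gamma_{ji}=\gamma_{ij}\mu_{ji}$; $\mu_{ij}\mu_{kl}=\mu_{kl}\mu_{ij}$, $\gamma_{ij}\gamma_{kl}=\gamma_{kl}\gamma_{ij}$, $\mu_{ij}\gamma_{kl}=\gamma_{kl}\mu_{ij}$. For $k<n$, $VSPG_k$ is identified with the subgroup of $VSPG_n$ generated by $\mu_{ij},\gamma_{ij}$ with $i,j\le k$. For $2\le i\le n$, $VS_{i-1}$ is the subgroup generated by $\mu_{1i},\dots,\mu_{i-1,i},\mu_{i1},\dots,\mu_{i,i-1},\gamma_{1i},\dots,\gamma_{i-1,i},\gamma_{i1},\dots,\gamma_{i,i-1}$, and $VS_{i-1}^*$ is the normal closure of $VS_{i-1}$ in $VSPG_i$. Notation $a^b:=b^{-1}ab$. Reduced power of $\mu_{kj}$ ($1\le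 j\le k-1$): $\mu_{kj}^{w}$ where $w$ is the empty word or a reduced word (no adjacent mutually inverse letters) in $VSPG_{k-1}$ beginning with a nonzero power of some $\mu_{ij}$ or $\gamma_{ij}$ with $1\le i\le k-1$, $i\ne j$. Reduced powers of $\gamma_{kj},\gamma_{jk}$: $\gamma_{kj}^{w}$, $\gamma_{jk}^{w}$ where $w$ is the empty word or a reduced word in $VSPG_{k-1}$ beginning with a nonzero power of some $\gamma_{ij}$ or $\gamma_{ji}$ with $1\le i\le k-1$, $i\ne j$. *)

(* Defs.v *)
(* The group VSPG_m is given by generators and
   relations; we model it honestly as words in the generators and their
   inverses, modulo the congruence generated by free cancellation and the
   defining relations.  Subsets of VSPG_m are predicates on words. *)
From Stdlib Require Import List.
From mathcomp Require Import all_boot.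
Set Implicit Arguments. Unset Strict Implicit. Unset Printing Implicit Defensive.

(* generators mu_{ij} and gamma_{ij} (indices are 1-based) *)
Inductive gen : Type := Mu of nat & nat | Ga of nat & nat.

(* a letter: (true, g) stands for g^{-1}, (false, g) for g *)
Definition letter := (bool * gen)%type.
Definition word := seq letter.

Definition linv (x : letter) : letter := (~~ x.1, x.2).
Definition winv (w : word) : word := rev (map linv w).
Definition gw (g : gen) : word := [:: (false, g)].
(* conjugation x^w = w^{-1} x w *)
Definition conjw (x w : word) : word := winv w ++ x ++ w.

Definition idx_ok (m i : nat) : Prop := 1 <= i /\ i <= m.

Definition valid_gen (m : nat) (g : gen) : Prop :=
  match g with
  | Mu i j | Ga i j => idx_ok m i /\ idx_ok m j /\ i <> j
  end.

Definition valid_word (m : nat) (w : word) : Prop :=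
  forall x, List.In x w -> valid_gen m x.2.

Definition vspg_rel (m : nat) (l r : word) : Prop :=
  (exists i j k, idx_ok m i /\ idx_ok m j /\ idx_ok m k /\
     i <> j /\ i <> k /\ j <> k /\
     ((l = [:: (false, Mu i j); (false, Mu i k); (false, Mu j k)] /\
       r = [:: (false, Mu j k); (false, Mu i k); (false, Mu i j)]) \/
      (l = [:: (false, Mu i j); (false, Mu i k); (false, Ga j k)] /\
       r = [:: (false, Ga j k); (false, Mu i k); (false, Mu i j)]) \/
      (l = [:: (false, Ga i j); (false, Mu i k); (false, Mu j k)] /\
       r = [:: (false, Mu j k); (false, Mu i k); (false, Ga i j)])))
  \/ (exists i j, idx_ok m i /\ idx_ok m j /\ i <> j /\
       l = [:: (false, Mu i j); (false, Ga j i)] /\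
       r = [:: (false, Ga i j); (false, Mu j i)])
  \/ (exists i j k l0, idx_ok m i /\ idx_ok m j /\ idx_ok m k /\ idx_ok m l0 /\
       i <> j /\ i <> k /\ i <> l0 /\ j <> k /\ j <> l0 /\ k <> l0 /\
       ((l = [:: (false, Mu i j); (false, Mu k l0)] /\
         r = [:: (false, Mu k l0); (false, Mu i j)]) \/
        (l = [:: (false, Ga i j); (false, Ga k l0)] /\
         r = [:: (false, Ga k l0); (false, Ga i j)]) \/
        (l = [:: (false, Mu i j); (false, Ga k l0)] /\
         r = [:: (false, Ga k l0); (false, Mu i j)]))).

Inductive veq (m : nat) : word -> word -> Prop :=
  | veq_refl w : veq m w w
  | veq_sym u v : veq m u v -> veq m v u
  | veq_trans u v w : veq m u v -> veq m v w -> veq m u w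
  | veq_cancel u v x : veq m (u ++ x :: linv x :: v) (u ++ v)
  | veq_rel u v l r : vspg_rel m l r -> veq m (u ++ l ++ v) (u ++ r ++ v).

Definition gen_sub (m : nat) (S : word -> Prop) (w : word) : Prop :=
  exists s : seq (bool * word),
    (forall p, List.In p s -> valid_word m p.2 /\ S p.2) /\
    veq m w (flatten (map (fun p => if p.1 then winv p.2 else p.2) s)).

Definition normal_closure (m : nat) (H : word -> Prop) : word -> Prop :=
  gen_sub m (fun x => exists h g, H h /\ valid_word m h /\ valid_word m g /\
                                  x = conjw h g).

(* VS_{k-1} in VSPG_k, and VS_{k-1}^* *)
Definition VS_gens (k : nat) (x : word) : Prop :=
  exists j, 1 <= j <= k - 1 /\
    (x = gw (Mu j k) \/ x = gw (Mu k j) \/ x = gw (Ga j k) \/ x = gw (Ga k j)).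
Definition VS (k : nat) : word -> Prop := gen_sub k (VS_gens k).
Definition VS_star (k : nat) : word -> Prop := normal_closure k (VS k).

Fixpoint reduced (w : word) : Prop :=
  match w with
  | x :: ((y :: _) as t) => ~ (x.2 = y.2 /\ x.1 = ~~ y.1) /\ reduced t
  | _ => True
  end.

(* admissible exponent words for reduced powers of mu_{kj} *)
Definition mu_exp_word (k j : nat) (w : word) : Prop :=
  w = [::] \/
  (valid_word (k - 1) w /\ reduced w /\
   exists x t i, w = x :: t /\ 1 <= i <= k - 1 /\ i <> j /\
                 (x.2 = Mu i j \/ x.2 = Ga i j)).

(* admissible exponent words for reduced powers of gamma_{kj}, gamma_{jk} *)
Definition ga_exp_word (k j : nat) (w : word) : Prop :=
  w = [::] \/
  (valid_word (k - 1) w /\ reduced w /\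
   exists x t i, w = x :: t /\ 1 <= i <= k - 1 /\ i <> j /\
                 (x.2 = Ga i j \/ x.2 = Ga j i)).

Definition thm_gens (k : nat) (x : word) : Prop :=
  exists j, 1 <= j <= k - 1 /\
   (x = gw (Mu j k) \/
    (exists w, mu_exp_word k j w /\ x = conjw (gw (Mu k j)) w) \/
    (exists w, ga_exp_word k j w /\ x = conjw (gw (Ga k j)) w) \/
    (exists w, ga_exp_word k j w /\ x = conjw (gw (Ga j k)) w)).

(* Main.v *)
Require Import Defs.
From Stdlib Require Import List Classical.
From mathcomp Require Import all_boot zify.
Set Implicit Arguments. Unset Strict Implicit. Unset Printing Implicit Defensive.

Definition P (g : gen) : letter := (false, g).
Definition N (g : gen) : letter := (true, g).

Lemma linvK x : linv (linv x) = x.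
Proof. by case: x => [[] g]. Qed.

Lemma winv_cat a b : winv (a ++ b) = winv b ++ winv a.
Proof. by rewrite /winv map_cat rev_cat. Qed.

Lemma winv_cons x a : winv (x :: a) = winv a ++ [:: linv x].
Proof. by rewrite /winv /= rev_cons cats1. Qed.

Lemma winvK a : winv (winv a) = a.
Proof. elim: a => // x a IH; by rewrite winv_cons winv_cat IH /= linvK. Qed.

Section Veq.
Variable m : nat.

Lemma veq_cong a b u v : veq m u v -> veq m (a ++ u ++ b) (a ++ v ++ b).
Proof.
elim => {u v}.
- move=> w; exact: veq_refl.
- move=> u v _ IH; exact: veq_sym.
- move=> u v w _ IH1 _ IH2; exact: veq_trans IH1 IH2.
- move=> u v x.
  have -> : a ++ (u ++ x :: linv x :: v) ++ b = (a ++ u) ++ x :: linv x :: (v ++ b)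
    by rewrite -!catA.
  have -> : a ++ (u ++ v) ++ b = (a ++ u) ++ (v ++ b) by rewrite -!catA.
  exact: veq_cancel.
- move=> u v l r H.
  have -> : a ++ (u ++ l ++ v) ++ b = (a ++ u) ++ l ++ (v ++ b) by rewrite -!catA.
  have -> : a ++ (u ++ r ++ v) ++ b = (a ++ u) ++ r ++ (v ++ b) by rewrite -!catA.
  exact: veq_rel.
Qed.

Lemma veq_inv_r w : veq m (w ++ winv w) [::].
Proof.
elim: w => [|x w IH] /=; first exact: veq_refl.
rewrite winv_cons.
apply: (veq_trans (v := x :: [:: linv x])).
  have := veq_cong [:: x] [:: linv x] IH. by rewrite /= -catA.
exact: (veq_cancel m [::] [::] x).
Qed.

Lemma veq_inv_l w : veq m (winv w ++ w) [::].
Proof. have := veq_inv_r (winv w). by rewrite winvK. Qed.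

Lemma veq_winv u v : veq m u v -> veq m (winv u) (winv v).
Proof.
elim => {u v}.
- move=> w; exact: veq_refl.
- move=> u v _ IH; exact: veq_sym.
- move=> u v w _ IH1 _ IH2; exact: veq_trans IH1 IH2.
- move=> u v x.
  rewrite !winv_cat !winv_cons linvK -!catA /=.
  exact: veq_cancel.
- move=> u v l r H.
  have Hlr : veq m (winv l) (winv r).
    apply: (veq_trans (v := winv l ++ (r ++ winv r))).
      have := veq_cong (winv l) [::] (veq_sym (veq_inv_r r)). by rewrite !cats0.
    apply: (veq_trans (v := winv l ++ (l ++ winv r))).
      have := veq_cong (winv l) (winv r) (veq_sym (veq_rel [::] [::] H)).
      by rewrite /= !cats0.
    have := veq_cong [::] (winv r) (veq_inv_l l).
    by rewrite /= -!catA.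
  rewrite !winv_cat -!catA.
  exact: veq_cong.
Qed.

End Veq.
Lemma In_rev (T : Type) (x : T) s : List.In x (rev s) -> List.In x s.
Proof.
elim: s => [|y s IH] //=. rewrite rev_cons -cats1 => /List.in_app_iff [/IH|] ; first by right.
by case => // ->; left.
Qed.

Section Gen.
Variable m : nat.
Variable S : word -> Prop.
Notation Hs := (gen_sub m S).

Definition fl (s : seq (bool * word)) : word :=
  flatten (map (fun p : bool * word => if p.1 then winv p.2 else p.2) s).

Lemma Hs_veq u v : veq m u v -> Hs u -> Hs v.
Proof.
move=> Huv [s [Hs1 Hs2]]; exists s; split => //.
exact: veq_trans (veq_sym Huv) Hs2.
Qed.

Lemma Hs_cat u v : Hs u -> Hs v -> Hs (u ++ v).
Proof.
move=> [s1 [A1 B1]] [s2 [A2 B2]]; exists (s1 ++ s2); split.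
  move=> p /List.in_app_iff [] ?; [exact: A1|exact: A2].
rewrite map_cat flatten_cat.
apply: (veq_trans (v := flatten (map (fun p : bool * word => if p.1 then winv p.2 else p.2) s1) ++ v)).
  have := veq_cong [::] v B1. by rewrite /=.
have := veq_cong (flatten (map (fun p : bool * word => if p.1 then winv p.2 else p.2) s1)) [::] B2.
by rewrite !cats0.
Qed.

Lemma fl_rev s : fl (map (fun p : bool * word => (~~ p.1, p.2)) (rev s)) = winv (fl s).
Proof.
rewrite /fl; elim: s => [|p s IH] //=.
rewrite rev_cons -cats1 !map_cat flatten_cat IH winv_cat /= cats0.
by case: p.1 => //=; rewrite winvK.
Qed.

Lemma Hs_inv u : Hs u -> Hs (winv u).
Proof.
move=> [s [A B]]; exists (map (fun p : bool * word => (~~ p.1, p.2)) (rev s)); split.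
  move=> p Hp.
  suff [q [<- Hq]] : exists q, (~~ q.1, q.2) = p /\ List.In q (rev s) by exact: (A q (In_rev Hq)).
  move: Hp; elim: (rev s) => [|z t IH] //= [<-|Hp]; first by exists z; split => //; left.
  have [q [? ?]] := IH Hp; exists q; split => //; by right.
have := fl_rev s. rewrite /fl => ->.
exact: veq_winv.
Qed.

Lemma Hs_gen x : S x -> valid_word m x -> Hs x.
Proof.
move=> Sx Vx; exists [:: (false, x)]; split.
  by move=> p [<-|//]; split.
rewrite /= cats0; exact: veq_refl.
Qed.

Lemma Hs_nil : Hs [::].
Proof. exists [::]; split => //; exact: veq_refl. Qed.

Lemma Hs_sub (S' : word -> Prop) w :
  (forall x, S' x -> valid_word m x -> Hs x) -> gen_sub m S' w -> Hs w.
Proof.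
move=> HS [s [A B]]; apply: Hs_veq (veq_sym B) _.
elim: s A {B} => [|p s IH] A /=; first exact: Hs_nil.
apply: Hs_cat; last by apply: IH => q Hq; apply: A; right.
have [V Sp] := A p (or_introl erefl).
have := HS _ Sp V. case: p.1 => //; exact: Hs_inv.
Qed.

Definition Hc (w X : word) := Hs (conjw X w).

Lemma Hc_veq w X Y : veq m X Y -> Hc w X -> Hc w Y.
Proof. move=> H; apply: Hs_veq; exact: veq_cong. Qed.

Lemma Hc_cat w X Y : Hc w X -> Hc w Y -> Hc w (X ++ Y).
Proof.
move=> HX HY; have := Hs_cat HX HY; apply: Hs_veq.
rewrite /conjw.
have -> : (winv w ++ X ++ w) ++ winv w ++ Y ++ w = (winv w ++ X) ++ (w ++ winv w) ++ (Y ++ w)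
  by rewrite -!catA.
have -> : winv w ++ (X ++ Y) ++ w = (winv w ++ X) ++ [::] ++ (Y ++ w) by rewrite -!catA.
apply: veq_cong; exact: veq_inv_r.
Qed.

Lemma Hc_inv w X : Hc w X -> Hc w (winv X).
Proof.
rewrite /Hc /conjw => H; have := Hs_inv H.
by rewrite !winv_cat winvK -!catA.
Qed.


Lemma conjw_conjw X u v : conjw (conjw X u) v = conjw X (u ++ v).
Proof. by rewrite /conjw winv_cat -!catA. Qed.

Lemma Hc_cons y w X : Hc w (conjw X [:: y]) -> Hc (y :: w) X.
Proof. by rewrite /Hc conjw_conjw. Qed.

Lemma Hc_cancel u x v X : Hc (u ++ v) X -> Hc (u ++ x :: linv x :: v) X.
Proof.
rewrite /Hc /conjw !winv_cat !winv_cons linvK => H.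
apply: Hs_veq H. apply: veq_sym.
rewrite -!catA /=.
apply: veq_trans (veq_cancel _ _ _ _) _.
have -> : winv v ++ winv u ++ X ++ u ++ x :: linv x :: v
   = (winv v ++ winv u ++ X ++ u) ++ x :: linv x :: v by rewrite -!catA.
apply: veq_trans (veq_cancel _ _ _ _) _.
rewrite -!catA; exact: veq_refl.
Qed.

End Gen.

Lemma valid_cat m a b : valid_word m a -> valid_word m b -> valid_word m (a ++ b).
Proof.
rewrite /valid_word => Ha Hb x Hx.
have : List.In x a \/ List.In x b.
  clear Ha. induction a as [|y a IH]; simpl in *; first by right.
  destruct Hx as [->|Hx]; first by left; left.
  destruct (IH Hx); [left; right|right] => //.
by case=> ?; [apply: Ha|apply: Hb].
Qed.

Lemma valid_winv m a : valid_word m a -> valid_word m (winv a).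
Proof.
rewrite /valid_word /winv => Ha x Hx; have {}Hx := In_rev Hx.
suff [y [<- Hy]] : exists y, linv y = x /\ List.In y a by exact: (Ha y Hy).
clear Ha; induction a as [|z a IH]; simpl in *; first by [].
destruct Hx as [<-|Hx]; first by exists z; split => //; left.
have [y [? ?]] := IH Hx; exists y; split => //; by right.
Qed.

Lemma valid_conj m X w : valid_word m X -> valid_word m w -> valid_word m (conjw X w).
Proof. move=> HX Hw; rewrite /conjw; apply: valid_cat; [exact: valid_winv|exact: valid_cat]. Qed.

Lemma valid_mono m w : valid_word (m - 1) w -> valid_word m w.
Proof.
move=> H x Hx; have := H x Hx; case: x.2 => i j /=; rewrite /idx_ok; lia.
Qed.

Lemma valid_tail m y w : valid_word m (y :: w) -> valid_word m w.
Proof. move=> H x Hx; apply: H; by right. Qed.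


Lemma Hc_uncons m S y w X : Hc m S (y :: w) X -> Hc m S w (conjw X [:: y]).
Proof. by rewrite /Hc conjw_conjw. Qed.

Section Words.
Variable m : nat.

Lemma rel_veq l r : vspg_rel m l r -> veq m l r.
Proof. move=> H; have := veq_rel [::] [::] H. by rewrite /= !cats0. Qed.

Variables T S y : gen.

Lemma W1 : veq m [:: P T; P S; P y] [:: P y; P S; P T] ->
  veq m [:: N y; P T; P y] [:: P S; P T; N y; N S; P y].
Proof.
move=> H.
apply: veq_trans (veq_sym (veq_cancel m [:: N y; P T] [:: P y] (P S))) _.
apply: veq_trans (veq_sym (veq_cancel m [:: N y; P T; P S] [:: N S; P y] (P y))) _.
apply: veq_trans (veq_cong [:: N y] [:: N y; N S; P y] H) _.
exact: (veq_cancel m [::] [:: P S; P T; N y; N S; P y] (N y)).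
Qed.

Lemma W1n : veq m [:: P T; P S; P y] [:: P y; P S; P T] ->
  veq m [:: P y; P T; N y] [:: P y; N S; N y; P T; P S].
Proof.
move=> H.
apply: veq_trans (veq_sym (veq_cancel m [:: P y] [:: P T; N y] (N S))) _.
apply: veq_trans (veq_sym (veq_cancel m [:: P y; N S] [:: P S; P T; N y] (N y))) _.
apply: veq_trans (veq_cong [:: P y; N S; N y] [:: N y] (veq_sym H)) _.
exact: (veq_cancel m [:: P y; N S; N y; P T; P S] [::] (P y)).
Qed.

Lemma W2 : veq m [:: P T; P y; P S] [:: P S; P y; P T] ->
  veq m [:: N y; P T; P y] [:: N y; P S; P y; P T; N S].
Proof.
move=> H.
apply: veq_trans (veq_sym (veq_cancel m [:: N y; P T; P y] [::] (P S))) _.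
exact: (veq_cong [:: N y] [:: N S] H).
Qed.

Lemma W2n : veq m [:: P T; P y; P S] [:: P S; P y; P T] ->
  veq m [:: P y; P T; N y] [:: N S; P T; P y; P S; N y].
Proof.
move=> H.
apply: veq_trans (veq_sym (veq_cancel m [::] [:: P y; P T; N y] (N S))) _.
exact: (veq_cong [:: N S] [:: N y] (veq_sym H)).
Qed.

Lemma Wc : veq m [:: P T; P y] [:: P y; P T] ->
  veq m [:: N y; P T; P y] [:: P T] /\ veq m [:: P y; P T; N y] [:: P T].
Proof.
move=> H; split.
  apply: veq_trans (veq_cong [:: N y] [::] H) _.
  exact: (veq_cancel m [::] [:: P T] (N y)).
apply: veq_trans (veq_cong [::] [:: N y] (veq_sym H)) _.
exact: (veq_cancel m [:: P T] [::] (P y)).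
Qed.

Variable Sg : word -> Prop.
Notation Hc := (Hc m Sg).

Lemma hcL1 (s : bool) w : veq m [:: P T; P S; P y] [:: P y; P S; P T] ->
  Hc w [:: P S] -> Hc w [:: P T] -> Hc ((s, y) :: w) [:: P S] -> Hc ((s, y) :: w) [:: P T].
Proof.
move=> H HS HT HyS; have HyS' := Hc_inv (Hc_uncons HyS).
apply: Hc_cons; case: s HyS HyS' => _ HyS'.
- apply: (Hc_veq (X := [:: P y; N S; N y] ++ [:: P T; P S])); first exact: veq_sym (W1n H).
  apply: Hc_cat; first exact: HyS'.
  exact: (Hc_cat HT HS).
- apply: (Hc_veq (X := [:: P S; P T] ++ [:: N y; N S; P y])); first exact: veq_sym (W1 H).
  apply: Hc_cat; first exact: (Hc_cat HS HT).
  exact: HyS'.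
Qed.

Lemma hcL2 (s : bool) w : veq m [:: P T; P y; P S] [:: P S; P y; P T] ->
  Hc w [:: P S] -> Hc w [:: P T] -> Hc ((s, y) :: w) [:: P S] -> Hc ((s, y) :: w) [:: P T].
Proof.
move=> H HS HT HyS; have HyS' := Hc_uncons HyS; have HS' := Hc_inv HS.
apply: Hc_cons; case: s HyS HyS' => _ HyS'.
- apply: (Hc_veq (X := [:: N S; P T] ++ [:: P y; P S; N y])); first exact: veq_sym (W2n H).
  apply: Hc_cat; last exact: HyS'.
  exact: (Hc_cat HS' HT).
- apply: (Hc_veq (X := [:: N y; P S; P y] ++ [:: P T; N S])); first exact: veq_sym (W2 H).
  apply: Hc_cat; first exact: HyS'.
  exact: (Hc_cat HT HS').
Qed.

Lemma hcC (s : bool) w : veq m [:: P T; P y] [:: P y; P T] ->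
  Hc w [:: P T] -> Hc ((s, y) :: w) [:: P T].
Proof.
move=> H HT; have [H1 H2] := Wc H.
apply: Hc_cons; case: s.
- apply: (Hc_veq (X := [:: P T])); [exact: veq_sym H2 | exact: HT].
- apply: (Hc_veq (X := [:: P T])); [exact: veq_sym H1 | exact: HT].
Qed.

End Words.

Lemma In_cat (T : Type) (z : T) a b : List.In z (a ++ b) <-> List.In z a \/ List.In z b.
Proof.
elim: a => [|x a IH] /=; first by split; [right|case].
rewrite IH; tauto.
Qed.

Lemma valid_drop m u x v : valid_word m (u ++ x :: linv x :: v) -> valid_word m (u ++ v).
Proof.
move=> H z Hz; apply: H; move/In_cat: Hz => [?|?]; apply/In_cat; [left|right; right; right] => //.
Qed.

Lemma not_reduced w : ~ reduced w -> exists u x v, w = u ++ x :: linv x :: v.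
Proof.
elim: w => [|[x1 x2] [|[y1 y2] t] IH] //=.
case: (classic (x2 = y2 /\ x1 = ~~ y1)) => [[e1 e2] _|nxy].
  by exists [::], (x1, x2), t; rewrite /linv /= e1 e2 negbK.
move=> nr; have /IH [u [z [v e]]] : ~ reduced ((y1, y2) :: t) by tauto.
by exists ((x1, x2) :: u), z, v; rewrite e.
Qed.

Lemma reduced_tail y w : reduced (y :: w) -> reduced w.
Proof. by case: w => //= z t []. Qed.

Section RelsLemmas.
Variable m : nat.
Ltac relt := apply: rel_veq; first [left | right; left | right; right].

Lemma R1 i j l : idx_ok m i -> idx_ok m j -> idx_ok m l -> i <> j -> i <> l -> j <> l ->
  veq m [:: P (Mu i j); P (Mu i l); P (Mu j l)] [:: P (Mu j l); P (Mu i l); P (Mu i j)].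
Proof. move=> *; apply: rel_veq; left; exists i, j, l; do 6 (split; first by []); by left. Qed.
Lemma R2 i j l : idx_ok m i -> idx_ok m j -> idx_ok m l -> i <> j -> i <> l -> j <> l ->
  veq m [:: P (Mu i j); P (Mu i l); P (Ga j l)] [:: P (Ga j l); P (Mu i l); P (Mu i j)].
Proof. move=> *; apply: rel_veq; left; exists i, j, l; do 6 (split; first by []); by right; left. Qed.
Lemma R3 i j l : idx_ok m i -> idx_ok m j -> idx_ok m l -> i <> j -> i <> l -> j <> l ->
  veq m [:: P (Ga i j); P (Mu i l); P (Mu j l)] [:: P (Mu j l); P (Mu i l); P (Ga i j)].
Proof. move=> *; apply: rel_veq; left; exists i, j, l; do 6 (split; first by []); by right; right. Qed.
Lemma R4 i j : idx_ok m i -> idx_ok m j -> i <> j ->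
  veq m [:: P (Mu i j); P (Ga j i)] [:: P (Ga i j); P (Mu j i)].
Proof. move=> *; apply: rel_veq; right; left; exists i, j; by do 3 (split; first by []). Qed.
Lemma C1 i j a b : idx_ok m i -> idx_ok m j -> idx_ok m a -> idx_ok m b ->
  i <> j -> i <> a -> i <> b -> j <> a -> j <> b -> a <> b ->
  veq m [:: P (Mu i j); P (Mu a b)] [:: P (Mu a b); P (Mu i j)].
Proof. move=> *; apply: rel_veq; right; right; exists i, j, a, b; do 10 (split; first by []); by left. Qed.
Lemma C2 i j a b : idx_ok m i -> idx_ok m j -> idx_ok m a -> idx_ok m b ->
  i <> j -> i <> a -> i <> b -> j <> a -> j <> b -> a <> b ->
  veq m [:: P (Ga i j); P (Ga a b)] [:: P (Ga a b); P (Ga i j)].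
Proof. move=> *; apply: rel_veq; right; right; exists i, j, a, b; do 10 (split; first by []); by right; left. Qed.
Lemma C3 i j a b : idx_ok m i -> idx_ok m j -> idx_ok m a -> idx_ok m b ->
  i <> j -> i <> a -> i <> b -> j <> a -> j <> b -> a <> b ->
  veq m [:: P (Mu i j); P (Ga a b)] [:: P (Ga a b); P (Mu i j)].
Proof. move=> *; apply: rel_veq; right; right; exists i, j, a, b; do 10 (split; first by []); by right; right. Qed.
End RelsLemmas.

Section Key.
Variable k : nat.
Notation Hs := (gen_sub k (thm_gens k)).
Notation Hck := (Hc k (thm_gens k)).

Ltac ix := rewrite /idx_ok; lia.

Definition good3 w := forall j, 1 <= j <= k - 1 ->
  Hck w [:: P (Mu k j)] /\ Hck w [:: P (Ga k j)] /\ Hck w [:: P (Ga j k)].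

Lemma r4comb w i j : idx_ok k i -> idx_ok k j -> i <> j ->
  Hck w [:: P (Ga i j)] -> Hck w [:: P (Mu j i)] -> Hck w [:: P (Ga j i)] ->
  Hck w [:: P (Mu i j)].
Proof.
move=> hi hj hij H1 H2 H3.
apply: (Hc_veq (X := ([:: P (Ga i j)] ++ [:: P (Mu j i)]) ++ [:: N (Ga j i)])).
  apply: veq_sym.
  apply: veq_trans (veq_sym (veq_cancel k [:: P (Mu i j)] [::] (P (Ga j i)))) _.
  exact: (veq_cong [::] [:: N (Ga j i)] (R4 hi hj hij)).
apply: Hc_cat; first exact: Hc_cat H1 H2.
exact: (Hc_inv H3).
Qed.

Lemma muJK w j : good3 w -> 1 <= j <= k - 1 -> Hck w [:: P (Mu j k)].
Proof.
move=> G hj; have [H1 [H2 H3]] := G j hj.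
apply: r4comb => //; ix.
Qed.

Lemma vgen_k g : valid_gen (k - 1) g -> valid_gen k g.
Proof. case: g => i j /=; rewrite /idx_ok; lia. Qed.

Lemma valid1 g : valid_gen k g -> valid_word k [:: P g].
Proof. by move=> H x [<-|]. Qed.

Lemma dirMu w y i j : valid_word (k - 1) (y :: w) -> reduced (y :: w) ->
  1 <= i <= k - 1 -> i <> j -> 1 <= j <= k - 1 ->
  (y.2 = Mu i j \/ y.2 = Ga i j) -> Hck (y :: w) [:: P (Mu k j)].
Proof.
move=> V R hi hij hj hy; apply: Hs_gen.
  exists j; split => //; right; left; exists (y :: w); split => //.
  right; split => //; split => //; exists y, w, i; by do 3 (split => //).
apply: valid_conj; last exact: valid_mono.
apply: valid1 => /=; split; [|split]; ix.
Qed.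

Lemma dirGa1 w y i j : valid_word (k - 1) (y :: w) -> reduced (y :: w) ->
  1 <= i <= k - 1 -> i <> j -> 1 <= j <= k - 1 ->
  (y.2 = Ga i j \/ y.2 = Ga j i) -> Hck (y :: w) [:: P (Ga k j)].
Proof.
move=> V R hi hij hj hy; apply: Hs_gen.
  exists j; split => //; right; right; left; exists (y :: w); split => //.
  right; split => //; split => //; exists y, w, i; by do 3 (split => //).
apply: valid_conj; last exact: valid_mono.
apply: valid1 => /=; split; [|split]; ix.
Qed.

Lemma dirGa2 w y i j : valid_word (k - 1) (y :: w) -> reduced (y :: w) ->
  1 <= i <= k - 1 -> i <> j -> 1 <= j <= k - 1 ->
  (y.2 = Ga i j \/ y.2 = Ga j i) -> Hck (y :: w) [:: P (Ga j k)].
Proof.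
move=> V R hi hij hj hy; apply: Hs_gen.
  exists j; split => //; right; right; right; exists (y :: w); split => //.
  right; split => //; split => //; exists y, w, i; by do 3 (split => //).
apply: valid_conj; last exact: valid_mono.
apply: valid1 => /=; split; [|split]; ix.
Qed.

Lemma good3_nil : good3 [::].
Proof.
move=> j hj; split; [|split]; apply: Hs_gen.
- exists j; split => //; right; left; exists [::]; split => //; by left.
- apply: valid_conj => //; apply: valid1 => /=; split; [|split]; ix.
- exists j; split => //; right; right; left; exists [::]; split => //; by left.
- apply: valid_conj => //; apply: valid1 => /=; split; [|split]; ix.
- exists j; split => //; right; right; right; exists [::]; split => //; by left.
- apply: valid_conj => //; apply: valid1 => /=; split; [|split]; ix.
Qed.

End Key.

Section Key2.
Variable k : nat.
Notation Hs := (gen_sub k (thm_gens k)).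
Notation Hck := (Hc k (thm_gens k)).
Ltac ix := rewrite /idx_ok; lia.
Notation I := ltac:(ix) (only parsing).

Lemma Mlem s a j w : good3 k w -> valid_word (k - 1) ((s, Mu a j) :: w) ->
  reduced ((s, Mu a j) :: w) -> 1 <= a <= k - 1 -> 1 <= j <= k - 1 -> a <> j ->
  Hck ((s, Mu a j) :: w) [:: P (Mu a k)].
Proof.
move=> IH V R ha hj haj.
have [Ij1 [Ij2 Ij3]] := IH j hj.
have [Ia1 [Ia2 Ia3]] := IH a ha.
have D : Hck ((s, Mu a j) :: w) [:: P (Mu k j)].
  apply: (dirMu (i := a) V R) => //; first [by left | ix].
apply: r4comb; try ix.
- exact: (hcL2 (@R3 k a k j I I I I I I) Ij1 Ia3 D).
- exact: (hcL1 (@R1 k k a j I I I I I I) Ij1 Ia1 D).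
- exact: (hcL1 (@R3 k k a j I I I I I I) Ij1 Ia2 D).
Qed.

Lemma step s G w : good3 k w -> valid_word (k - 1) ((s, G) :: w) ->
  reduced ((s, G) :: w) -> good3 k ((s, G) :: w).
Proof.
move=> IH V R j hj.
have VG : valid_gen (k - 1) G := V _ (or_introl erefl).
have [Ij1 [Ij2 Ij3]] := IH j hj.
case: G V R VG => a b V R /= [ha [hb hab]].
- have ha' : 1 <= a <= k - 1 by move: ha; rewrite /idx_ok; lia.
  have hb' : 1 <= b <= k - 1 by move: hb; rewrite /idx_ok; lia.
  have [Ia1 [Ia2 Ia3]] := IH a ha'.
  have [Ib1 [Ib2 Ib3]] := IH b hb'.
  have Ma := muJK IH ha'.
  destruct (PeanoNat.Nat.eq_dec j b) as [->|hjb].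
    have Dm : Hck ((s, Mu a b) :: w) [:: P (Mu a k)] by exact: Mlem.
    split; [|split].
    + apply: (dirMu (i := a) V R) => //; first [by left | ix].
    + exact: (hcL2 (veq_sym (@R2 k a k b I I I I I I)) Ma Ib2 Dm).
    + exact: (hcL1 (veq_sym (@R2 k a b k I I I I I I)) Ma Ib3 Dm).
  destruct (PeanoNat.Nat.eq_dec j a) as [->|hja].
    have D : Hck ((s, Mu a b) :: w) [:: P (Mu k b)].
      apply: (dirMu (i := a) V R) => //; first [by left | ix].
    split; [|split].
    + exact: (hcL1 (@R1 k k a b I I I I I I) Ib1 Ia1 D).
    + exact: (hcL1 (@R3 k k a b I I I I I I) Ib1 Ia2 D).
    + exact: (hcL2 (@R3 k a k b I I I I I I) Ib1 Ia3 D).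
  split; [|split].
  + exact: (hcC s (@C1 k k j a b I I I I I I I I I I) Ij1).
  + exact: (hcC s (veq_sym (@C3 k a b k j I I I I I I I I I I)) Ij2).
  + exact: (hcC s (veq_sym (@C3 k a b j k I I I I I I I I I I)) Ij3).
- have ha' : 1 <= a <= k - 1 by move: ha; rewrite /idx_ok; lia.
  have hb' : 1 <= b <= k - 1 by move: hb; rewrite /idx_ok; lia.
  have [Ia1 [Ia2 Ia3]] := IH a ha'.
  have [Ib1 [Ib2 Ib3]] := IH b hb'.
  destruct (PeanoNat.Nat.eq_dec j b) as [->|hjb].
    split; [|split].
    + apply: (dirMu (i := a) V R) => //; first [by right | ix].
    + apply: (dirGa1 (i := a) V R) => //; first [by left | ix].
    + apply: (dirGa2 (i := a) V R) => //; first [by left | ix].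
  destruct (PeanoNat.Nat.eq_dec j a) as [->|hja].
    split; [|split].
    + have D : Hck ((s, Ga a b) :: w) [:: P (Mu k b)].
        apply: (dirMu (i := a) V R) => //; first [by right | ix].
      exact: (hcL1 (@R2 k k a b I I I I I I) Ib1 Ia1 D).
    + apply: (dirGa1 (i := b) V R) => //; first [by right | ix].
    + apply: (dirGa2 (i := b) V R) => //; first [by right | ix].
  split; [|split].
  + exact: (hcC s (@C3 k k j a b I I I I I I I I I I) Ij1).
  + exact: (hcC s (@C2 k k j a b I I I I I I I I I I) Ij2).
  + exact: (hcC s (@C2 k j k a b I I I I I I I I I I) Ij3).
Qed.

Lemma key n w : size w <= n -> valid_word (k - 1) w -> good3 k w.
Proof.
elim: n w => [|n IHn] w.
  by case: w => // _ _; exact: good3_nil.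
move=> hs V.
case: (classic (reduced w)) => [R|NR].
  case: w hs V R => [|[s G] w] hs V R; first exact: good3_nil.
  apply: step => //; apply: IHn; [by [] | exact: valid_tail V].
have [u [x [v e]]] := not_reduced NR; subst w.
have hs' : size (u ++ v) <= n by move: hs; rewrite !size_cat /=; lia.
have G := IHn (u ++ v) hs' (valid_drop V).
move=> j hj; have [G1 [G2 G3]] := G j hj; split; [|split]; exact: Hc_cancel.
Qed.

End Key2.

Lemma Hc_sub m S S' w x :
  (forall t, S' t -> valid_word m t -> Hc m S w t) -> gen_sub m S' x -> Hc m S w x.
Proof.
move=> HS [s [A B]]; apply: Hc_veq (veq_sym B) _.
elim: s A {B} => [|p s IH] A /=.
  rewrite /Hc /conjw /=; apply: Hs_veq (veq_sym (veq_inv_l _ _)) _; exact: Hs_nil.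
apply: Hc_cat; last by apply: IH => q Hq; apply: A; right.
have [V Sp] := A p (or_introl erefl).
have := HS _ Sp V. case: p.1 => //; exact: Hc_inv.
Qed.

Section Main.
Variable k : nat.
Notation Hs := (gen_sub k (thm_gens k)).
Ltac ix := rewrite /idx_ok; lia.

Lemma conjw_nil X : conjw X [::] = X.
Proof. by rewrite /conjw /= cats0. Qed.

Lemma exp_valid_mu j w : mu_exp_word k j w -> valid_word (k - 1) w.
Proof. by case=> [->|[]]. Qed.
Lemma exp_valid_ga j w : ga_exp_word k j w -> valid_word (k - 1) w.
Proof. by case=> [->|[]]. Qed.

Lemma Hs_VSgen x : VS_gens k x -> Hs x.
Proof.
move=> [j [hj H]].
have V : forall g, valid_gen k g -> valid_word k [:: P g] by move=> g Hg z [<-|].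
case: H => [->|[->|[->|->]]].
- apply: Hs_gen; first by exists j; split => //; left.
  apply: V => /=; split; [|split]; ix.
- rewrite -[gw _]conjw_nil; apply: Hs_gen.
    by exists j; split => //; right; left; exists [::]; split => //; left.
  rewrite conjw_nil; apply: V => /=; split; [|split]; ix.
- rewrite -[gw _]conjw_nil; apply: Hs_gen.
    by exists j; split => //; right; right; right; exists [::]; split => //; left.
  rewrite conjw_nil; apply: V => /=; split; [|split]; ix.
- rewrite -[gw _]conjw_nil; apply: Hs_gen.
    by exists j; split => //; right; right; left; exists [::]; split => //; left.
  rewrite conjw_nil; apply: V => /=; split; [|split]; ix.
Qed.

Lemma H_letter s g x : valid_gen k g -> Hs x -> Hs (conjw x [:: (s, g)]).
Proof.
move=> Vg Hx.
have Hy : (exists a b, (g = Mu a b \/ g = Ga a b) /\ (a = k \/ b = k) /\ a <> b /\ idx_ok k a /\ idx_ok k b)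
          \/ valid_word (k - 1) [:: (s, g)].
  case: g Vg => a b /= [ha [hb hab]].
  - case: (PeanoNat.Nat.eq_dec a k) => [ek|nak].
      left; exists a, b; do !split => //; [by left|by left].
    case: (PeanoNat.Nat.eq_dec b k) => [ek|nbk].
      left; exists a, b; do !split => //; [by left|by right].
    right => z [<-|//] /=; split; [|split] => //; move: ha hb; rewrite /idx_ok; lia.
  - case: (PeanoNat.Nat.eq_dec a k) => [ek|nak].
      left; exists a, b; do !split => //; [by right|by left].
    case: (PeanoNat.Nat.eq_dec b k) => [ek|nbk].
      left; exists a, b; do !split => //; [by right|by right].
    right => z [<-|//] /=; split; [|split] => //; move: ha hb; rewrite /idx_ok; lia.
case: Hy => [[a [b [eg [eab [hab [ha hb]]]]]]|Vy].
  have Hg : Hs [:: (false, g)].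
    apply: Hs_VSgen.
    move: ha hb; rewrite /idx_ok => ha hb.
    case: eab => [ea|eb].
    - rewrite ea in eg hab; exists b; split; first lia.
      case: eg => ->; [right; left|right; right; right]; reflexivity.
    - rewrite eb in eg hab; exists a; split; first lia.
      case: eg => ->; [left|right; right; left]; reflexivity.
  have Hsg : Hs [:: (s, g)] by case: s; [exact: (Hs_inv Hg)|exact: Hg].
  rewrite /conjw; apply: Hs_cat; last exact: Hs_cat Hx Hsg.
  exact: Hs_inv Hsg.
have G := key (leqnn _) Vy.
apply: (Hc_sub (S' := thm_gens k)) Hx => t [j [hj Ht]] Vt.
case: Ht => [->|[[w [ew ->]]|[[w [ew ->]]|[w [ew ->]]]]].
- exact: muJK G hj.
- rewrite /Hc conjw_conjw.
  have := key (leqnn _) (valid_cat (exp_valid_mu ew) Vy) hj.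
  by case=> [+ _]; rewrite /Hc.
- rewrite /Hc conjw_conjw.
  have := key (leqnn _) (valid_cat (exp_valid_ga ew) Vy) hj.
  by case=> [_ [+ _]]; rewrite /Hc.
- rewrite /Hc conjw_conjw.
  have := key (leqnn _) (valid_cat (exp_valid_ga ew) Vy) hj.
  by case=> [_ [_ +]]; rewrite /Hc.
Qed.

Lemma Hs_conj g h : valid_word k g -> Hs h -> Hs (conjw h g).
Proof.
elim: g h => [|y g IH] h Vg Hh; first by rewrite conjw_nil.
have -> : conjw h (y :: g) = conjw (conjw h [:: y]) g by rewrite conjw_conjw.
apply: IH; first exact: valid_tail Vg.
case: y Vg => s G Vg; apply: H_letter => //.
exact: (Vg _ (or_introl erefl)).
Qed.

End Main.

Theorem mainTheorem11 (n k : nat) (hk3 : 3 <= k) (hkn : k <= n) :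
  forall w : word, valid_word k w ->
    (VS_star k w <-> gen_sub k (thm_gens k) w).
Proof.
move=> w Vw; split.
- apply: Hs_sub => x [h [g [Hh [Vh [Vg ->]]]]] _.
  apply: Hs_conj => //.
  apply: (Hs_sub (S' := VS_gens k)) Hh => t Ht _; exact: Hs_VSgen.
- move=> [s [A B]]; exists s; split => //.
  move=> p Hp; have [Vp Tp] := A p Hp; split => //.
  have VSg : forall x, VS_gens k x -> valid_word k x -> VS k x.
    by move=> x Hx Vx; apply: Hs_gen.
  case: Tp => [j [hj Ht]].
  case: Ht => [e|[[w' [ew e]]|[[w' [ew e]]|[w' [ew e]]]]].
  + exists p.2, [::]; split; [|split; [done|split; [by move=> ? []|by rewrite conjw_nil]]].
    apply: VSg => //; exists j; split => //; by left.
  + exists (gw (Mu k j)), w'; split; last split; last split.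
    * apply: VSg; first by exists j; split => //; right; left.
      move=> z [<-|//] /=; rewrite /idx_ok; lia.
    * move=> z [<-|//] /=; rewrite /idx_ok; lia.
    * exact: valid_mono (exp_valid_mu ew).
    * exact: e.
  + exists (gw (Ga k j)), w'; split; last split; last split.
    * apply: VSg; first by exists j; split => //; right; right; right.
      move=> z [<-|//] /=; rewrite /idx_ok; lia.
    * move=> z [<-|//] /=; rewrite /idx_ok; lia.
    * exact: valid_mono (exp_valid_ga ew).
    * exact: e.
  + exists (gw (Ga j k)), w'; split; last split; last split.
    * apply: VSg; first by exists j; split => //; right; right; left.
      move=> z [<-|//] /=; rewrite /idx_ok; lia.
    * move=> z [<-|//] /=; rewrite /idx_ok; lia.
    * exact: valid_mono (exp_valid_ga ew).
    * exact: e.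
Qed.
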